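(* Consider the weighted stochastic block model: there are $r$ latent communities labelled $1,\ldots,r$; each node $i$ is independently assigned a latent community $Z_i$ with $\mathbb{P}(Z_i=z)=p_z>0$ for $z=1,\ldots,r$; each unordered pair of distinct nodes $i\neq j$ carries a real-valued edge weight $X_{i,j}=X_{j,i}$, where, conditional on the community indicators, the edge weights are independent and $X_{i,j}$ has distribution function $F_{z_1,z_2}(x)=\mathbb{P}(X_{i,j}\le x\mid Z_i=z_1,Z_j=z_2)$. Let $F_z(x):=\sum_{z'=1}^r F_{z,z'}(x)\,p_{z'}=\mathbb{P}(X_{i,j}\le x\mid Z_i=z)$. Suppose that the functions $F_1,\ldots,F_r$ are linearly independent. Then the weighted stochastic block model, i.e. the number of communities $r$, the community distribution $\boldsymbol{p}=(p_1,\ldots,p_r)'$, and the conditional distributions $F_{z_1,z_2}$, $1\le z_1,z_2\le r$, is nonparametrically identified from the distribution of the edge weights, up to relabeling of the latent communities.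
   Context: ''Nonparametrically identified up to relabeling'' means that any two weighted stochastic block models satisfying the assumptions and inducing the same joint distribution of observed edge weights have the same $r$ and have $(\boldsymbol{p},\{F_{z_1,z_2}\})$ equal up to a single permutation of the community labels, with no parametric restrictions imposed on the $F_{z_1,z_2}$. *)

(* Defs.v *)
From HB Require Import structures.
From mathcomp Require Import all_boot all_order all_algebra.
From mathcomp Require Import all_classical all_reals topology normedtype.
Set Implicit Arguments. Unset Strict Implicit. Unset Printing Implicit Defensive.
Import Order.TTheory GRing.Theory Num.Theory numFieldNormedType.Exports.
Local Open Scope ring_scope.
Local Open Scope classical_set_scope.

Definition is_cdf (R : realType) (F : R -> R) : Prop :=
  (forall x y : R, x <= y -> F x <= F y) /\
  (forall x : R, F @ x^'+ --> F x) /\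
  (F @ -oo --> (0 : R)) /\
  (F @ +oo --> (1 : R)).

Definition wsbm (R : realType) (r : nat) (p : 'I_r -> R)
    (F : 'I_r -> 'I_r -> R -> R) : Prop :=
  (forall z, 0 < p z) /\
  (\sum_(z < r) p z = 1) /\
  (forall z1 z2, is_cdf (F z1 z2)) /\
  (forall z1 z2, F z1 z2 = F z2 z1).

Definition marg_cdf (R : realType) (r : nat) (p : 'I_r -> R)
    (F : 'I_r -> 'I_r -> R -> R) (z : 'I_r) (x : R) : R :=
  \sum_(z' < r) F z z' x * p z'.

Definition marg_lin_indep (R : realType) (r : nat) (p : 'I_r -> R)
    (F : 'I_r -> 'I_r -> R -> R) : Prop :=
  forall c : 'I_r -> R,
    (forall x : R, \sum_(z < r) c z * marg_cdf p F z x = 0) ->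
    forall z, c z = 0.

(* Joint distribution function of the edge weights (X_ij)_{i<j} on n nodes:
   P(X_ij <= x i j for all i < j)
     = sum_{z : [n] -> [r]} prod_i p_{z_i} prod_{i<j} F_{z_i,z_j}(x i j). *)
Definition edge_joint_cdf (R : realType) (r : nat) (p : 'I_r -> R)
    (F : 'I_r -> 'I_r -> R -> R) (n : nat) (x : 'I_n -> 'I_n -> R) : R :=
  \sum_(z : {ffun 'I_n -> 'I_r})
     ((\prod_(i < n) p (z i)) *
      \prod_(i < n) \prod_(j < n | (i < j)%N) F (z i) (z j) (x i j)).

(* Main.v *)
Require Import Defs.
From HB Require Import structures.
From mathcomp Require Import all_boot all_order all_algebra.
From mathcomp Require Import all_classical all_reals topology normedtype.
From mathcomp Require Import ring.
Import Order.TTheory GRing.Theory Num.Theory numFieldNormedType.Exports.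
Local Open Scope ring_scope.

Set Implicit Arguments. Unset Strict Implicit. Unset Printing Implicit Defensive.
Section S.
Variable R : realType.

Definition lin_indep (r : nat) (f : 'I_r -> R -> R) :=
  forall c : 'I_r -> R, (forall x, \sum_(z < r) c z * f z x = 0) -> forall z, c z = 0.

Definition evmx (r k : nat) (f : 'I_r -> R -> R) (a : 'I_k -> R) : 'M[R]_(k, r) :=
  \matrix_(i < k, z < r) f z (a i).

Lemma rank_step (r k : nat) (f : 'I_r -> R -> R) (a : 'I_k -> R) :
  lin_indep f -> (\rank (evmx f a) < r)%N ->
  exists b : R, (\rank (evmx f a) < \rank (evmx f (fun i : 'I_(k + 1) =>
       match fintype.split i with inl i' => a i' | inr _ => b end)))%N.
Proof.
move=> li lt.
have cnz : cokermx (evmx f a) != 0.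
  by rewrite -mxrank_eq0 mxrank_coker subn_eq0 -ltnNge.
have [i [j nz]] : exists i j, cokermx (evmx f a) i j != 0.
  apply/not_existsP => H; move/negP: cnz; apply; apply/eqP/matrixP => i j.
  rewrite [RHS]mxE; apply/eqP; apply/negPn/negP => nij; exact: (H i (ex_intro _ j nij)).
have [b hb] : exists b, \sum_(z < r) cokermx (evmx f a) z j * f z b != 0.
  apply/not_existsP => H; move/eqP: nz; apply; apply: (li (fun z => cokermx (evmx f a) z j)) => x.
  by apply/eqP; apply/negPn/negP; apply: H.
exists b.
set v : 'rV[R]_r := \row_z f z b.
have -> : evmx f (fun i : 'I_(k + 1) => match fintype.split i with inl i' => a i' | inr _ => b end)
   = col_mx (evmx f a) v.
  apply/matrixP => i' z; rewrite !mxE; case: splitP => [i1|i1] _; rewrite ?mxE //.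
have nsub : ~~ (v <= evmx f a)%MS.
  rewrite submxE; apply/negP => /eqP /matrixP /(_ 0 j); rewrite !mxE => e.
  move/eqP: hb; apply; apply: (etrans _ e); apply: eq_bigr => z _; rewrite mulrC; congr (_ * _); by rewrite /v mxE.
have sAB : (evmx f a <= col_mx (evmx f a) v)%MS.
  by rewrite -addsmxE addsmxSl.
have [le eqC] := mxrank_leqif_sup sAB. rewrite ltn_neqAle le andbT eqC.
apply/negP => sBA; move/negP: nsub; apply; apply: submx_trans _ sBA.
by rewrite -addsmxE addsmxSr.
Qed.

Lemma dual_ex (r : nat) (f : 'I_r -> R -> R) : lin_indep f ->
  exists k (a : 'I_k -> R) (B : 'I_r -> 'I_k -> R),
    forall y z, \sum_(i < k) B y i * f z (a i) = (y == z)%:R.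
Proof.
move=> li.
have H : forall n, (n <= r)%N -> exists k (a : 'I_k -> R), (n <= \rank (evmx f a))%N.
  elim=> [|n IH] hn; first by exists 0%N, (fun _ => 0).
  have [k [a ha]] := IH (ltnW hn).
  case: (leqP n.+1 (\rank (evmx f a))) => h; first by exists k, a.
  have hr : (\rank (evmx f a) < r)%N.
    by apply: leq_ltn_trans hn; rewrite -ltnS.
  have [b hb] := rank_step li hr.
  by exists (k + 1)%N, (fun i : 'I_(k + 1) => match fintype.split i with inl i' => a i' | inr _ => b end); apply: leq_ltn_trans hb.
have [k [a ha]] := H r (leqnn r).
have rf : row_full (evmx f a).
  by rewrite /row_full eqn_leq rank_leq_col ha.
have [B hB] := row_fullP rf.
exists k, a, (fun y i => B y i) => y z.
have := congr1 (fun M : 'M[R]_r => M y z) hB; rewrite /= !mxE => <-.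
by apply: eq_bigr => i _; rewrite mxE.
Qed.

Local Open Scope classical_set_scope.

Lemma lim_uniq (f : R -> R) (l1 l2 : R) :
  f @ +oo --> l1 -> f @ +oo --> l2 -> l1 = l2.
Proof. by move=> h1 h2; apply: (cvg_unique _ h1 h2). Qed.

Lemma sum_delta (n : nat) (z : 'I_n) (h : 'I_n -> R) :
  \sum_(y < n) (z == y)%:R * h y = h z.
Proof.
rewrite (bigD1 z) //= eqxx mul1r big1 ?addr0 // => y /negbTE.
by rewrite eq_sym => ->; rewrite mul0r.
Qed.

Lemma coefE (n k : nat) (g : 'I_n -> R -> R) (a : 'I_k -> R) (B : 'I_n -> 'I_k -> R)
  (hB : forall y z, \sum_(i < k) B y i * g z (a i) = (y == z)%:R)
  (h : R -> R) (c : 'I_n -> R) :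
  (forall x, h x = \sum_(w < n) c w * g w x) ->
  forall u, \sum_(i < k) B u i * h (a i) = c u.
Proof.
move=> hh u.
under eq_bigr do rewrite hh big_distrr /=.
rewrite exchange_big /= -[RHS]sum_delta; apply: eq_bigr => w _.
by rewrite -hB big_distrl /=; apply: eq_bigr => i _; ring.
Qed.

Lemma contract2 (n k : nat) (h : 'I_n -> R -> R) (m : 'I_n -> R) (a : 'I_k -> R)
  (Bu : 'I_k -> R) (x : R) :
  \sum_(i < k) Bu i * (\sum_(y < n) m y * h y (a i) * h y x) =
  \sum_(y < n) m y * (\sum_(i < k) Bu i * h y (a i)) * h y x.
Proof.
under eq_bigr do rewrite big_distrr /=.
rewrite exchange_big /=; apply: eq_bigr => y _.
rewrite big_distrr big_distrl /=; apply: eq_bigr => i _; ring.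
Qed.

Lemma contract3 (n k : nat) (h : 'I_n -> R -> R) (m : 'I_n -> R) (a : 'I_k -> R)
  (Bu Bv : 'I_k -> R) (x : R) :
  \sum_(i < k) \sum_(j < k) Bu i * Bv j * (\sum_(y < n) m y * h y (a i) * h y (a j) * h y x) =
  \sum_(y < n) m y * (\sum_(i < k) Bu i * h y (a i)) * (\sum_(j < k) Bv j * h y (a j)) * h y x.
Proof.
under eq_bigr do under eq_bigr do rewrite big_distrr /=.
under eq_bigr do rewrite exchange_big /=.
rewrite exchange_big /=; apply: eq_bigr => y _.
rewrite big_distrr /= big_distrl /= exchange_big /=; apply: eq_bigr => j _.
rewrite big_distrr /= big_distrl /= big_distrl /=; apply: eq_bigr => i _; ring.
Qed.


Lemma key (r s : nat) (f : 'I_r -> R -> R) (g : 'I_s -> R -> R) (p : 'I_r -> R) (q : 'I_s -> R) :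
  lin_indep f -> lin_indep g -> (forall z, p z != 0) ->
  (forall z, f z @ +oo --> (1:R)) -> (forall w, g w @ +oo --> (1:R)) ->
  (forall a b, \sum_(z < r) p z * f z a * f z b = \sum_(w < s) q w * g w a * g w b) ->
  (forall a b c, \sum_(z < r) p z * f z a * f z b * f z c =
                 \sum_(w < s) q w * g w a * g w b * g w c) ->
  forall z, exists w, g w = f z.
Proof.
move=> lf lg pnz fl gl T2 T3 z.
have [k [a [B hB]]] := dual_ex lg.
have [k' [a' [B' hB']]] := dual_ex lf.
pose psi (u : 'I_s) (h : R -> R) := \sum_(i < k) B u i * h (a i).
have hp : forall x, f z x = \sum_(w < s) (q w * (\sum_(i < k') B' z i * g w (a' i)) / p z) * g w x.
  move=> x.
  have e0 : \sum_(i < k') B' z i * (\sum_(y < r) p y * f y (a' i) * f y x)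
          = \sum_(i < k') B' z i * (\sum_(w < s) q w * g w (a' i) * g w x).
    by apply: eq_bigr => i _; rewrite T2.
  rewrite !contract2 in e0.
  have L : \sum_(y < r) p y * (\sum_(i < k') B' z i * f y (a' i)) * f y x = p z * f z x.
    rewrite -[RHS](sum_delta z (fun y => p y * f y x)); apply: eq_bigr => y _; rewrite hB'; ring.
  rewrite L in e0.
  apply: (mulfI (pnz z)); rewrite e0 big_distrr /=; apply: eq_bigr => w _.
  field; exact: pnz.
have hc : forall x, f z x = \sum_(w < s) psi w (f z) * g w x.
  move=> x; rewrite hp; apply: eq_bigr => w _; congr (_ * _); symmetry.
  exact: (coefE hB hp).
have dis : forall u v, u != v -> psi u (f z) * psi v (f z) = 0.
  move=> u v uv.
  suff H : forall c, \sum_(y < r) (p y * psi u (f y) * psi v (f y)) * f y c = 0.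
    have /eqP := lf _ H z; rewrite -mulrA mulf_eq0 (negbTE (pnz z)) /=.
    by move/eqP.
  move=> c.
  have e0 : \sum_(i < k) \sum_(j < k) B u i * B v j *
              (\sum_(y < r) p y * f y (a i) * f y (a j) * f y c)
          = \sum_(i < k) \sum_(j < k) B u i * B v j *
              (\sum_(w < s) q w * g w (a i) * g w (a j) * g w c).
    by apply: eq_bigr => i _; apply: eq_bigr => j _; rewrite T3.
  rewrite !contract3 in e0; rewrite /psi e0.
  apply: big1 => w _; rewrite !hB.
  have [<-|nuw] := eqVneq u w.
    by rewrite eq_sym (negbTE uv) mulr0 mul0r.
  by rewrite mulr0 !mul0r.
have [v hv] : exists v, psi v (f z) != 0.
  apply/not_existsP => H.
  have f0 : f z = fun _ => 0.
    apply: funext => x; rewrite hc big1 // => w _.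
    by have /negP/negPn/eqP -> := H w; rewrite mul0r.
  have h1 := fl z; rewrite f0 in h1.
  have e10 := lim_uniq h1 (cvg_cst (0:R)).
  by move: (oner_neq0 R); rewrite e10 eqxx.
have oth : forall u, u != v -> psi u (f z) = 0.
  move=> u uv; move: (dis u v uv) => /eqP; rewrite mulf_eq0 (negbTE hv) orbF.
  by move/eqP.
have fe : f z = fun x => psi v (f z) * g v x.
  apply: funext => x; rewrite hc (bigD1 v) //= big1 ?addr0 // => u /oth ->.
  by rewrite mul0r.
have k1 : psi v (f z) = 1.
  have h1 := fl z; rewrite fe in h1.
  have := lim_uniq h1 (@cvgMl_tmp _ _ _ _ _ (psi v (f z)) _ (gl v)).
  by rewrite mulr1 => <-.
by exists v; rewrite fe k1; apply: funext => x; rewrite mul1r.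
Qed.


Lemma sum_ffunS (n : nat) (T : finType) (G : {ffun 'I_n.+1 -> T} -> R) :
  \sum_(z : {ffun 'I_n.+1 -> T}) G z =
  \sum_(t : T) \sum_(g : {ffun 'I_n -> T})
     G [ffun i => if unlift ord0 i is Some j then g j else t].
Proof.
rewrite pair_bigA /=.
apply: (reindex (fun pr : T * {ffun 'I_n -> T} =>
   [ffun i => if unlift ord0 i is Some j then pr.2 j else pr.1])).
exists (fun z : {ffun 'I_n.+1 -> T} => (z ord0, [ffun j => z (lift ord0 j)])).
  move=> [t g] _ /=; rewrite ffunE unlift_none; congr pair.
  by apply/ffunP => j; rewrite !ffunE liftK.
move=> z _; apply/ffunP => i; rewrite ffunE /=.
by case: unliftP => [j|] ->; rewrite ?ffunE.
Qed.

Lemma sum_ffun4 (T : finType) (G : T -> T -> T -> T -> R) :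
  \sum_(z : {ffun 'I_4 -> T}) G (z ord0) (z (lift ord0 ord0))
     (z (lift ord0 (lift ord0 ord0))) (z (lift ord0 (lift ord0 (lift ord0 ord0)))) =
  \sum_(a : T) \sum_(b : T) \sum_(c : T) \sum_(d : T) G a b c d.
Proof.
rewrite sum_ffunS; apply: eq_bigr => a _.
rewrite sum_ffunS; apply: eq_bigr => b _.
rewrite sum_ffunS; apply: eq_bigr => c _.
rewrite sum_ffunS; apply: eq_bigr => d _.
rewrite (eq_bigr (fun _ => G a b c d)); last first.
  by move=> g _; do 5!(rewrite ?ffunE ?liftK ?unlift_none /=).
by rewrite sumr_const card_ffun card_ord expn0 mulr1n.
Qed.


Definition xx (e01 e02 e03 e12 e13 e23 : R) (i j : 'I_4) : R :=
  match nat_of_ord i, nat_of_ord j with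
  | 0, 1 => e01 | 0, 2 => e02 | 0, 3 => e03 | 1, 2 => e12 | 1, 3 => e13 | _, _ => e23
  end%N.

Definition S4g (r : nat) (p : 'I_r -> R) (A01 A02 A03 A12 A13 A23 : 'I_r -> 'I_r -> R) : R :=
  \sum_(a < r) \sum_(b < r) \sum_(c < r) \sum_(d < r)
    p a * p b * p c * p d *
    (A01 a b * A02 a c * A03 a d * A12 b c * A13 b d * A23 c d).

Definition S4 (r : nat) (p : 'I_r -> R) (F : 'I_r -> 'I_r -> R -> R)
  (e01 e02 e03 e12 e13 e23 : R) : R :=
  S4g p (fun a b => F a b e01) (fun a b => F a b e02) (fun a b => F a b e03)
        (fun a b => F a b e12) (fun a b => F a b e13) (fun a b => F a b e23).

Lemma E4 (r : nat) (p : 'I_r -> R) (F : 'I_r -> 'I_r -> R -> R) e01 e02 e03 e12 e13 e23 :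
  edge_joint_cdf p F (xx e01 e02 e03 e12 e13 e23) = S4 p F e01 e02 e03 e12 e13 e23.
Proof.
rewrite /edge_joint_cdf /S4 /S4g -(sum_ffun4 (fun a b c d => p a * p b * p c * p d *
    (F a b e01 * F a c e02 * F a d e03 * F b c e12 * F b d e13 * F c d e23))).
apply: eq_bigr => z _.
under [X in _ * X]eq_bigr do rewrite big_mkcond.
rewrite !big_ord_recl !big_ord0 /=.
ring.
Qed.



Lemma cvg_sumR (n : nat) (h : 'I_n -> R -> R) (l : 'I_n -> R) :
  (forall i, h i @ +oo --> l i) ->
  (fun t => \sum_(i < n) h i t) @ +oo --> \sum_(i < n) l i.
Proof.
move=> H; apply: (@cvg_big R 'I_n +%R 0 xpredT add_continuous R _ _ h l) => //.
Qed.

Lemma S4g_cvg (r : nat) (p : 'I_r -> R) (H01 H02 H03 H12 H13 H23 : R -> 'I_r -> 'I_r -> R)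
  (L01 L02 L03 L12 L13 L23 : 'I_r -> 'I_r -> R) :
  (forall a b, (fun t => H01 t a b) @ +oo --> L01 a b) ->
  (forall a b, (fun t => H02 t a b) @ +oo --> L02 a b) ->
  (forall a b, (fun t => H03 t a b) @ +oo --> L03 a b) ->
  (forall a b, (fun t => H12 t a b) @ +oo --> L12 a b) ->
  (forall a b, (fun t => H13 t a b) @ +oo --> L13 a b) ->
  (forall a b, (fun t => H23 t a b) @ +oo --> L23 a b) ->
  (fun t => S4g p (H01 t) (H02 t) (H03 t) (H12 t) (H13 t) (H23 t)) @ +oo -->
    S4g p L01 L02 L03 L12 L13 L23.
Proof.
move=> h01 h02 h03 h12 h13 h23; rewrite /S4g.
apply: cvg_sumR => a; apply: cvg_sumR => b; apply: cvg_sumR => c; apply: cvg_sumR => d.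
apply: cvgMl_tmp.
apply: cvgM; [apply: cvgM|]; [apply: cvgM|..]; [apply: cvgM|..]; [apply: cvgM|..]; by [].
Qed.

Lemma trip (r : nat) (x : R) (u v w : 'I_r -> R) :
  x * (\sum_(b < r) u b) * (\sum_(c < r) v c) * (\sum_(d < r) w d) =
  \sum_(b < r) \sum_(c < r) \sum_(d < r) x * u b * v c * w d.
Proof.
rewrite [x * _]big_distrr /= [X in X * _]big_distrl /= big_distrl /=.
apply: eq_bigr => b _; rewrite [X in X * _]big_distrr /= big_distrl /=.
by apply: eq_bigr => c _; rewrite big_distrr.
Qed.

Lemma dbl (r : nat) (x : R) (v w : 'I_r -> R) :
  x * (\sum_(c < r) v c) * (\sum_(d < r) w d) =
  \sum_(c < r) \sum_(d < r) x * v c * w d.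
Proof.
rewrite [X in X * _]big_distrr /= big_distrl /=.
by apply: eq_bigr => c _; rewrite big_distrr.
Qed.

Definition one2 (r : nat) : 'I_r -> 'I_r -> R := fun _ _ => 1.

Lemma star3 (r : nat) (p : 'I_r -> R) (A01 A02 A03 : 'I_r -> 'I_r -> R) :
  S4g p A01 A02 A03 (@one2 r) (@one2 r) (@one2 r) =
  \sum_(a < r) p a * (\sum_(b < r) A01 a b * p b) * (\sum_(c < r) A02 a c * p c)
                   * (\sum_(d < r) A03 a d * p d).
Proof.
rewrite /S4g; apply: eq_bigr => a _; rewrite trip.
apply: eq_bigr => b _; apply: eq_bigr => c _; apply: eq_bigr => d _.
rewrite /one2; ring.
Qed.

Lemma pairform (r : nat) (p : 'I_r -> R) (A01 A02 A13 : 'I_r -> 'I_r -> R) :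
  S4g p A01 A02 (@one2 r) (@one2 r) A13 (@one2 r) =
  \sum_(a < r) \sum_(b < r) p a * p b * A01 a b * (\sum_(c < r) A02 a c * p c)
                   * (\sum_(d < r) A13 b d * p d).
Proof.
rewrite /S4g; apply: eq_bigr => a _; apply: eq_bigr => b _; rewrite dbl.
apply: eq_bigr => c _; apply: eq_bigr => d _.
rewrite /one2; ring.
Qed.


Lemma inj_lin (r : nat) (f : 'I_r -> R -> R) : lin_indep f ->
  forall z1 z2, f z1 = f z2 -> z1 = z2.
Proof.
move=> li z1 z2 e; apply/eqP/negPn/negP => nz.
have H : forall x, \sum_(z < r) ((z1 == z)%:R - (z2 == z)%:R) * f z x = 0.
  move=> x; under eq_bigr do rewrite mulrBl.
  by rewrite sumrB !sum_delta e subrr.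
have := li _ H z1; rewrite eqxx eq_sym (negbTE nz) subr0 => h10.
by apply: (negP (oner_neq0 R)); apply/eqP; exact: h10.
Qed.

Lemma drop1 (r : nat) (h : 'I_r -> R) (f : 'I_r -> R -> R) :
  (forall z, f z @ +oo --> (1:R)) ->
  (fun t => \sum_(a < r) h a * f a t) @ +oo --> \sum_(a < r) h a.
Proof.
move=> fl.
have H : forall a, (fun t => h a * f a t) @ +oo --> h a * 1.
  by move=> a; apply: (@cvgMl_tmp _ _ _ _ _ (h a) _ (fl a)).
have := cvg_sumR H.
have e1 : \sum_(a < r) h a * 1 = \sum_(a < r) h a by under eq_bigr do rewrite mulr1.
by rewrite e1.
Qed.

Lemma marg_cvg (r : nat) (p : 'I_r -> R) (F : 'I_r -> 'I_r -> R -> R) :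
  wsbm p F -> forall z, marg_cdf p F z @ +oo --> (1:R).
Proof.
move=> [pos [s1 [cdf sym]]] z.
have H : forall z', (fun x => F z z' x * p z') @ +oo --> 1 * p z'.
  by move=> z'; apply: cvgMr_tmp; exact: (proj2 (proj2 (proj2 (cdf z z')))).
have := cvg_sumR H.
have e1 : \sum_(z' < r) 1 * p z' = 1 by under eq_bigr do rewrite mul1r; exact: s1.
by rewrite e1.
Qed.

Lemma lim3 (r : nat) (p : 'I_r -> R) (F : 'I_r -> 'I_r -> R -> R) :
  wsbm p F -> forall al be ga,
  (fun t => edge_joint_cdf p F (xx al be ga t t t)) @ +oo -->
    \sum_(a < r) p a * marg_cdf p F a al * marg_cdf p F a be * marg_cdf p F a ga.
Proof.
move=> [pos [s1 [cdf sym]]] al be ga.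
have e : (fun t => edge_joint_cdf p F (xx al be ga t t t)) =
         (fun t => S4g p (fun a b => F a b al) (fun a b => F a b be) (fun a b => F a b ga)
                         (fun a b => F a b t) (fun a b => F a b t) (fun a b => F a b t)).
  by apply: funext => t; rewrite E4.
rewrite e; have := @S4g_cvg r p (fun _ a b => F a b al) (fun _ a b => F a b be)
   (fun _ a b => F a b ga) (fun t a b => F a b t) (fun t a b => F a b t) (fun t a b => F a b t)
   (fun a b => F a b al) (fun a b => F a b be) (fun a b => F a b ga) (@one2 r) (@one2 r) (@one2 r).
rewrite star3; apply.
- by move=> a b; apply: cvg_cst.
- by move=> a b; apply: cvg_cst.
- by move=> a b; apply: cvg_cst.
- by move=> a b; exact: (proj2 (proj2 (proj2 (cdf a b)))).
- by move=> a b; exact: (proj2 (proj2 (proj2 (cdf a b)))).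
- by move=> a b; exact: (proj2 (proj2 (proj2 (cdf a b)))).
Qed.

Lemma limpair (r : nat) (p : 'I_r -> R) (F : 'I_r -> 'I_r -> R -> R) :
  wsbm p F -> forall e al be,
  (fun t => edge_joint_cdf p F (xx e al t t be t)) @ +oo -->
    \sum_(a < r) \sum_(b < r) p a * p b * F a b e * marg_cdf p F a al * marg_cdf p F b be.
Proof.
move=> [pos [s1 [cdf sym]]] e al be.
have ee : (fun t => edge_joint_cdf p F (xx e al t t be t)) =
         (fun t => S4g p (fun a b => F a b e) (fun a b => F a b al) (fun a b => F a b t)
                         (fun a b => F a b t) (fun a b => F a b be) (fun a b => F a b t)).
  by apply: funext => t; rewrite E4.
rewrite ee; have := @S4g_cvg r p (fun _ a b => F a b e) (fun _ a b => F a b al)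
   (fun t a b => F a b t) (fun t a b => F a b t) (fun _ a b => F a b be) (fun t a b => F a b t)
   (fun a b => F a b e) (fun a b => F a b al) (@one2 r) (@one2 r) (fun a b => F a b be) (@one2 r).
rewrite pairform; apply.
- by move=> a b; apply: cvg_cst.
- by move=> a b; apply: cvg_cst.
- by move=> a b; exact: (proj2 (proj2 (proj2 (cdf a b)))).
- by move=> a b; exact: (proj2 (proj2 (proj2 (cdf a b)))).
- by move=> a b; apply: cvg_cst.
- by move=> a b; exact: (proj2 (proj2 (proj2 (cdf a b)))).
Qed.

End S.


Unset Implicit Arguments.

Theorem proposition1 (R : realType)
    (r : nat) (p : 'I_r -> R) (F : 'I_r -> 'I_r -> R -> R)
    (r' : nat) (p' : 'I_r' -> R) (F' : 'I_r' -> 'I_r' -> R -> R) :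
  wsbm p F -> marg_lin_indep p F ->
  wsbm p' F' -> marg_lin_indep p' F' ->
  (forall (n : nat) (x : 'I_n -> 'I_n -> R),
      edge_joint_cdf p F x = edge_joint_cdf p' F' x) ->
  r = r' /\
  exists sigma : 'I_r -> 'I_r',
    bijective sigma /\
    (forall z, p' (sigma z) = p z) /\
    (forall z1 z2, F' (sigma z1) (sigma z2) = F z1 z2).
Proof.
move=> W lf W' lg E.
have [pos [s1 [cdf sym]]] := W.
have [pos' [s1' [cdf' sym']]] := W'.
have fl := marg_cvg W; have gl := marg_cvg W'.
have lf' : lin_indep (marg_cdf p F) := lf.
have lg' : lin_indep (marg_cdf p' F') := lg.
have T3 : forall al be ga,
  \sum_(a < r) p a * marg_cdf p F a al * marg_cdf p F a be * marg_cdf p F a ga =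
  \sum_(w < r') p' w * marg_cdf p' F' w al * marg_cdf p' F' w be * marg_cdf p' F' w ga.
  move=> al be ga; apply: (lim_uniq (lim3 (al:=al) (be:=be) (ga:=ga) W)).
  have -> : (fun t => edge_joint_cdf p F (xx al be ga t t t)) =
            (fun t => edge_joint_cdf p' F' (xx al be ga t t t)).
    by apply: funext => t; apply: E.
  exact: (lim3 (al:=al) (be:=be) (ga:=ga) W').
have T2 : forall al be,
  \sum_(a < r) p a * marg_cdf p F a al * marg_cdf p F a be =
  \sum_(w < r') p' w * marg_cdf p' F' w al * marg_cdf p' F' w be.
  move=> al be.
  have h1 := drop1 (h:=fun a => p a * marg_cdf p F a al * marg_cdf p F a be) fl.
  have h2 := drop1 (h:=fun w => p' w * marg_cdf p' F' w al * marg_cdf p' F' w be) gl.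
  cbv beta in h1, h2.
  have e : (fun t => \sum_(a < r) p a * marg_cdf p F a al * marg_cdf p F a be * marg_cdf p F a t) =
           (fun t => \sum_(w < r') p' w * marg_cdf p' F' w al * marg_cdf p' F' w be * marg_cdf p' F' w t).
    by apply: funext => t; apply: T3.
  rewrite e in h1; exact: (lim_uniq h1 h2).
have T1 : forall al,
  \sum_(a < r) p a * marg_cdf p F a al = \sum_(w < r') p' w * marg_cdf p' F' w al.
  move=> al.
  have h1 := drop1 (h:=fun a => p a * marg_cdf p F a al) fl.
  have h2 := drop1 (h:=fun w => p' w * marg_cdf p' F' w al) gl.
  cbv beta in h1, h2.
  have e : (fun t => \sum_(a < r) p a * marg_cdf p F a al * marg_cdf p F a t) =
           (fun t => \sum_(w < r') p' w * marg_cdf p' F' w al * marg_cdf p' F' w t).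
    by apply: funext => t; apply: T2.
  rewrite e in h1; exact: (lim_uniq h1 h2).
have pnz : forall z, p z != 0 by move=> z; apply: lt0r_neq0.
have pnz' : forall z, p' z != 0 by move=> z; apply: lt0r_neq0.
have k1 := key lf' lg' pnz fl gl T2 T3.
have k2 := key lg' lf' pnz' gl fl (fun a b => esym (T2 a b)) (fun a b c => esym (T3 a b c)).
have [sig hsig] := choice k1.
have [tau htau] := choice k2.
have hsig' : forall z x, marg_cdf p' F' (sig z) x = marg_cdf p F z x by move=> z x; rewrite hsig.
have sinj : injective sig.
  by move=> z1 z2 e; apply: (inj_lin lf'); rewrite -!hsig e.
have tinj : injective tau.
  by move=> z1 z2 e; apply: (inj_lin lg'); rewrite -!htau e.
have le1 := @leq_card _ _ sig sinj; have le2 := @leq_card _ _ tau tinj.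
rewrite !card_ord in le1 le2.
split; first by apply/eqP; rewrite eqn_leq le1 le2.
have bij : bijective sig by apply: (@inj_card_bij _ _ sig sinj); rewrite !card_ord.
exists sig; split => //.
have hp : forall z, p' (sig z) = p z.
  have T1' : forall al, \sum_(z < r) (p z - p' (sig z)) * marg_cdf p F z al = 0.
    move=> al; under eq_bigr do rewrite mulrBl.
    rewrite sumrB T1 (reindex sig) /=; last exact: onW_bij.
    under [X in X - _]eq_bigr do rewrite hsig'.
    by rewrite subrr.
  move=> z; apply/eqP; rewrite eq_sym -subr_eq0; apply/eqP; exact: lf' _ T1' z.
split => // z1 z2.
have P : forall e al be,
  \sum_(a < r) \sum_(b < r) p a * p b * F a b e * marg_cdf p F a al * marg_cdf p F b be =
  \sum_(a < r') \sum_(b < r') p' a * p' b * F' a b e * marg_cdf p' F' a al * marg_cdf p' F' b be.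
  move=> e al be; apply: (lim_uniq (limpair (e:=e) (al:=al) (be:=be) W)).
  have -> : (fun t => edge_joint_cdf p F (xx e al t t be t)) =
            (fun t => edge_joint_cdf p' F' (xx e al t t be t)).
    by apply: funext => t; apply: E.
  exact: (limpair (e:=e) (al:=al) (be:=be) W').
have RI : forall h : 'I_r' -> R, \sum_(w < r') h w = \sum_(z < r) h (sig z).
  by move=> h; apply: (reindex sig); exact: onW_bij.
have D0 : forall e a b, p a * p b * (F a b e - F' (sig a) (sig b) e) = 0.
  move=> e.
  have H1 : forall al be, \sum_(a < r) (\sum_(b < r) p a * p b * (F a b e - F' (sig a) (sig b) e)
              * marg_cdf p F b be) * marg_cdf p F a al = 0.
    move=> al be; have := P e al be.
    rewrite RI; under [X in _ = X]eq_bigr do rewrite RI.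
    under [X in _ = X]eq_bigr do under eq_bigr do rewrite !hp !hsig'.
    move=> e1.
    have -> : \sum_(a < r) (\sum_(b < r) p a * p b * (F a b e - F' (sig a) (sig b) e)
              * marg_cdf p F b be) * marg_cdf p F a al =
      \sum_(a < r) \sum_(b < r) p a * p b * F a b e * marg_cdf p F a al * marg_cdf p F b be -
      \sum_(a < r) \sum_(b < r) p a * p b * F' (sig a) (sig b) e * marg_cdf p F a al * marg_cdf p F b be.
      rewrite -sumrB; apply: eq_bigr => a _; rewrite -sumrB big_distrl /=.
      by apply: eq_bigr => b _; ring.
    by rewrite e1 subrr.
  have H2 : forall a be, \sum_(b < r) p a * p b * (F a b e - F' (sig a) (sig b) e)
              * marg_cdf p F b be = 0.
    move=> a be; exact: (lf' _ (fun al => H1 al be) a).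
  move=> a b; exact: (lf' _ (H2 a) b).
apply: funext => e; apply/eqP.
have := D0 e z1 z2; move/eqP; rewrite mulf_eq0 mulf_eq0 (negbTE (pnz z1)) (negbTE (pnz z2)) /=.
by rewrite subr_eq0 eq_sym.
Qed.
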